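(* Let $W:\mathbb{R}\to\mathbb{R}$ be a bounded, monotone (nondecreasing) solution of $W=\mathcal{A}\Phi'(\mathcal{A}W)$ with $W(\varphi)\to\pm1$ as $\varphi\to\pm\infty$, and set $\widetilde W=W_{\rm sh}-W$. Then for all $\underline\tau,\overline\tau$ with $\underline\tau<\tau_+<\overline\tau$ there exist positive constants $\underline c,\overline c$ such that $$\underline c\,e^{-\overline\tau\varphi}\le\widetilde W(\varphi)\le\overline c\,e^{-\underline\tau\varphi}\qquad\text{for all }\varphi\ge0.$$
   Context: $\Phi:\mathbb{R}\to\mathbb{R}$ is twice continuously differentiable on $[-1,1]$ with $\Phi'(-1)=-1$, $\Phi'(1)=1$, $\Phi''\ge0$ on $[-1,1]$, $\Phi(-1)=\Phi(1)$, $\Phi''(-1)<1$, and $\lambda_+:=\Phi''(1)\in(0,1)$. $(\mathcal{A}U)(\varphi)=\int_{\varphi-1/2}^{\varphi+1/2}U(s)\,ds$; $W_{\rm sh}(\varphi)=\mathrm{sgn}(\varphi)$. $\tau_+>0$ denotes the unique positive real solution of $\tau^2=2\lambda_+(\cosh\tau-1)$. *)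

(* Defs.v *)
From Stdlib Require Import Reals Lra.
From Coquelicot Require Import Coquelicot.
Open Scope R_scope.

Definition I11 (x : R) : Prop := -1 <= x <= 1.

Definition has_deriv_on_I11 (g : R -> R) (x l : R) : Prop :=
  filterlim (fun h => (g (x + h) - g x) / h)
    (within (fun h => h <> 0 /\ I11 (x + h)) (locally 0)) (locally l).

Definition cont_on_I11 (g : R -> R) (x : R) : Prop :=
  filterlim g (within I11 (locally x)) (locally (g x)).

Definition opA (U : R -> R) (phi : R) : R := RInt U (phi - 1/2) (phi + 1/2).

(* W_sh = sgn, with the convention sgn(0) = 1 *)
Definition Wsh (phi : R) : R := if Rlt_dec phi 0 then -1 else 1.

(* Main.v *)
Require Import Defs.
From Stdlib Require Import Reals Lra Lia ZArith.
From Coquelicot Require Import Coquelicot.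
Open Scope R_scope.

Lemma step_ex_RInt (N : nat) : forall (k : R -> Z) a b, a <= b ->
  (forall x y, a <= x -> x <= y -> y <= b -> (k x <= k y)%Z) ->
  (k b - k a <= Z.of_nat N)%Z -> ex_RInt (fun x => IZR (k x)) a b.
Proof.
induction N as [|N IH]; intros k a b Hab Hk HN.
- apply ex_RInt_ext with (fun _ => IZR (k a)).
  + intros x Hx. rewrite Rmin_left in Hx by lra. rewrite Rmax_right in Hx by lra.
    f_equal. assert (H1 := Hk a x ltac:(lra) ltac:(lra) ltac:(lra)).
    assert (H2 := Hk x b ltac:(lra) ltac:(lra) ltac:(lra)). lia.
  + apply ex_RInt_const.
- set (E := fun x => a <= x <= b /\ k x = k a).
  assert (HE : bound E) by (exists b; intros x [Hx _]; lra).
  assert (HE2 : exists x, E x) by (exists a; split; [lra|reflexivity]).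
  destruct (completeness E HE HE2) as [c [Hc1 Hc2]].
  assert (Hac : a <= c) by (apply Hc1; split; [lra|reflexivity]).
  assert (Hcb : c <= b) by (apply Hc2; intros x [Hx _]; lra).
  assert (Hlow : forall x, a <= x < c -> k x = k a).
  { intros x Hx. destruct (Classical_Prop.classic (exists y, E y /\ x < y)) as [[y [[Hy1 Hy2] Hy3]]|Hn].
    - assert (H1 := Hk a x ltac:(lra) ltac:(lra) ltac:(lra)).
      assert (H2 := Hk x y ltac:(lra) ltac:(lra) ltac:(lra)). lia.
    - exfalso. assert (Hcx : c <= x).
      { apply Hc2. intros y Hy. apply Rnot_lt_le. intros Hxy. apply Hn. exists y. split; [exact Hy|exact Hxy]. }
      lra. }
  assert (Hhigh : forall x, c < x <= b -> (k a + 1 <= k x)%Z).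
  { intros x Hx. assert (H1 := Hk a x ltac:(lra) ltac:(lra) ltac:(lra)).
    destruct (Z.eq_dec (k x) (k a)) as [e|ne]; [|lia].
    exfalso. assert (x <= c) by (apply Hc1; split; [lra|exact e]). lra. }
  apply ex_RInt_Chasles with c.
  + apply ex_RInt_ext with (fun _ => IZR (k a)).
    * intros x Hx. rewrite Rmin_left in Hx by lra. rewrite Rmax_right in Hx by lra.
      rewrite (Hlow x); [reflexivity|lra].
    * apply ex_RInt_const.
  + destruct (Req_dec c b) as [->|Hcb'].
    * apply ex_RInt_point.
    * set (k' := fun x => if Rle_dec x c then (k a + 1)%Z else k x).
      apply ex_RInt_ext with (fun x => IZR (k' x)).
      -- intros x Hx. rewrite Rmin_left in Hx by lra. rewrite Rmax_right in Hx by lra.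
         unfold k'. destruct (Rle_dec x c); [lra|reflexivity].
      -- apply IH; [lra| |].
         ++ intros x y Hx Hxy Hy. unfold k'.
            destruct (Rle_dec x c); destruct (Rle_dec y c); try lia.
            ** apply Hhigh; lra.
            ** lra.
            ** apply Hk; lra.
         ++ unfold k'. destruct (Rle_dec b c); [lra|]. destruct (Rle_dec c c); [|lra]. lia.
Qed.

Lemma up_mono x y : x <= y -> (up x <= up y)%Z.
Proof.
intros H. destruct (archimed x) as [H1 H2]. destruct (archimed y) as [H3 H4].
assert (IZR (up x) - 1 < IZR (up y)) by lra.
assert (IZR (up x - 1) < IZR (up y)) by (rewrite minus_IZR; simpl; lra).
apply lt_IZR in H5. lia.
Qed.

Lemma mono_ex_RInt (f : R -> R) a b : a <= b ->
  (forall x y, a <= x -> x <= y -> y <= b -> f x <= f y) -> ex_RInt f a b.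
Proof.
intros Hab Hf.
set (fn := fun (n : nat) x => / INR (S n) * IZR (up (INR (S n) * f x))).
assert (Hint : forall n, ex_RInt (fn n) a b).
{ intros n. unfold fn.
  apply (ex_RInt_scal (fun x => IZR (up (INR (S n) * f x)))).
  apply step_ex_RInt with (Z.to_nat (up (INR (S n) * f b) - up (INR (S n) * f a))); auto.
  - intros x y Hx Hxy Hy. apply up_mono. apply Rmult_le_compat_l.
    + apply pos_INR.
    + apply Hf; auto.
  - rewrite Z2Nat.id; [lia|].
    assert (up (INR (S n) * f a) <= up (INR (S n) * f b))%Z; [|lia].
    apply up_mono, Rmult_le_compat_l; [apply pos_INR|apply Hf; lra]. }
destruct (filterlim_RInt fn a b eventually _ f (fun n => RInt (fn n) a b))
  as [If [_ HIf]].
- intros n. apply RInt_correct, Hint.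
- intros P [eps HP]. 
  destruct (archimed (/ eps)) as [Ha _].
  exists (Z.to_nat (up (/ eps))). intros n Hn. apply HP.
  intros t. 
  assert (Hpos : 0 < INR (S n)) by (apply lt_0_INR; lia).
  assert (HnR : / eps < INR (S n)).
  { apply Rlt_le_trans with (IZR (up (/eps))); [lra|].
    assert (0 < / eps) by (apply Rinv_0_lt_compat, cond_pos).
    assert (0 < IZR (up (/eps))) by lra. apply lt_IZR in H0.
    rewrite <- (Z2Nat.id (up (/ eps))) by lia. rewrite <- INR_IZR_INZ.
    apply le_INR. lia. }
  destruct (archimed (INR (S n) * f t)) as [H1 H2].
  change (Rabs (fn n t - f t) < eps).
  unfold fn.
  assert (E : / INR (S n) * IZR (up (INR (S n) * f t)) - f t
            = / INR (S n) * (IZR (up (INR (S n) * f t)) - INR (S n) * f t)) by (field; lra).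
  rewrite E. rewrite Rabs_mult, Rabs_inv, (Rabs_right (INR (S n))) by lra.
  rewrite Rabs_right by lra.
  assert (eps * INR (S n) > 1).
  { assert (H0 := cond_pos eps). apply Rmult_lt_compat_l with (r := eps) in HnR; auto.
    rewrite Rinv_r in HnR; lra. }
  apply Rmult_lt_reg_l with (INR (S n)); [lra|]. rewrite <- Rmult_assoc, Rinv_r by lra.
  nra.
- exists If; exact HIf.
Qed.

Lemma deriv_eps f x l : has_deriv_on_I11 f x l -> forall eps, 0 < eps ->
  exists d, 0 < d /\ forall h, h <> 0 -> Rabs h < d -> I11 (x + h) ->
    Rabs ((f (x + h) - f x) / h - l) < eps.
Proof.
intros H eps Heps.
destruct (H _ (locally_ball l (mkposreal eps Heps))) as [d Hd].
exists d. split; [apply cond_pos|]. intros h Hh1 Hh2 Hh3.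
apply (Hd h).
- change (Rabs (h - 0) < d). rewrite Rminus_0_r. exact Hh2.
- split; auto.
Qed.

Lemma deriv_interior f x l : -1 < x < 1 -> has_deriv_on_I11 f x l ->
  derivable_pt_lim f x l.
Proof.
intros Hx H eps Heps.
destruct (deriv_eps f x l H eps Heps) as [d [Hd Hd']].
assert (Hm : 0 < Rmin d (Rmin (1 - x) (x + 1))) by
  (repeat apply Rmin_pos; lra).
exists (mkposreal _ Hm). intros h Hh1 Hh2. simpl in Hh2.
apply Hd'; auto.
- apply Rlt_le_trans with (1 := Hh2); apply Rmin_l.
- assert (Rabs h < Rmin (1 - x) (x + 1)) by
    (apply Rlt_le_trans with (1 := Hh2); apply Rmin_r).
  assert (Rabs h < 1 - x) by (apply Rlt_le_trans with (1 := H0); apply Rmin_l).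
  assert (Rabs h < x + 1) by (apply Rlt_le_trans with (1 := H0); apply Rmin_r).
  unfold I11. destruct (Rabs_def2 _ _ H1); destruct (Rabs_def2 _ _ H2); lra.
Qed.

Lemma cont_within f x l : has_deriv_on_I11 f x l -> forall eps, 0 < eps ->
  exists d, 0 < d /\ forall y, Rabs (y - x) < d -> I11 y -> Rabs (f y - f x) < eps.
Proof.
intros H eps Heps.
destruct (deriv_eps f x l H 1 Rlt_0_1) as [d [Hd Hd']].
assert (Hm : 0 < Rmin d (eps / (Rabs l + 1))).
{ apply Rmin_pos; auto. apply Rdiv_lt_0_compat; auto. pose proof (Rabs_pos l); lra. }
exists (Rmin d (eps / (Rabs l + 1))). split; auto. intros y Hy HI.
destruct (Req_dec y x) as [->|Hne].
- rewrite Rminus_eq_0, Rabs_R0; auto.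
- set (h := y - x).
  assert (Hh : h <> 0) by (unfold h; lra).
  assert (Hy1 : Rabs h < d) by (apply Rlt_le_trans with (1 := Hy); apply Rmin_l).
  assert (Hy2 : Rabs h < eps / (Rabs l + 1)) by (apply Rlt_le_trans with (1 := Hy); apply Rmin_r).
  assert (E : x + h = y) by (unfold h; ring).
  specialize (Hd' h Hh Hy1 ltac:(rewrite E; auto)). rewrite E in Hd'.
  assert (E2 : f y - f x = h * ((f y - f x) / h)) by (field; auto).
  rewrite E2, Rabs_mult.
  assert (Rabs ((f y - f x) / h) <= Rabs l + 1).
  { assert (Rabs ((f y - f x) / h) <= Rabs ((f y - f x) / h - l) + Rabs l).
    { replace ((f y - f x) / h) with (((f y - f x) / h - l) + l) at 1 by ring. apply Rabs_triang. }
    lra. }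
  pose proof (Rabs_pos l). pose proof (Rabs_pos h). pose proof (Rabs_pos ((f y - f x) / h)).
  apply Rle_lt_trans with (Rabs h * (Rabs l + 1)); [apply Rmult_le_compat_l; auto|].
  apply Rmult_lt_reg_r with (/ (Rabs l + 1)). { apply Rinv_0_lt_compat; lra. }
  rewrite Rmult_assoc, Rinv_r by lra. rewrite Rmult_1_r. exact Hy2.
Qed.

Lemma mono_I11 f df : (forall x, I11 x -> has_deriv_on_I11 f x (df x)) ->
  (forall x, I11 x -> 0 <= df x) -> forall x y, -1 <= x -> x <= y -> y <= 1 -> f x <= f y.
Proof.
intros Hd Hpos.
assert (Hint : forall x y, -1 < x -> x < y -> y < 1 -> f x <= f y).
{ intros x y H1 H2 H3.
  destruct (MVT_gen f x y df) as [c [Hc Hc']].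
  - intros z Hz. rewrite Rmin_left in Hz by lra. rewrite Rmax_right in Hz by lra.
    apply is_derive_Reals, deriv_interior; [lra|]. apply Hd. unfold I11; lra.
  - intros z Hz. rewrite Rmin_left in Hz by lra. rewrite Rmax_right in Hz by lra.
    apply derivable_continuous_pt. exists (df z). apply deriv_interior; [lra|]. apply Hd. unfold I11; lra.
  - rewrite Rmin_left in Hc by lra. rewrite Rmax_right in Hc by lra.
    assert (0 <= df c) by (apply Hpos; unfold I11; lra). nra. }
intros x y H1 H2 H3.
destruct (Req_dec x y) as [->|Hne]; [lra|].
apply Rnot_lt_le. intros Hlt.
set (e := (f x - f y) / 2).
assert (He : 0 < e) by (unfold e; lra).
destruct (cont_within f x (df x) (Hd x ltac:(unfold I11; lra)) e He) as [d1 [Hd1 Hd1']].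
destruct (cont_within f y (df y) (Hd y ltac:(unfold I11; lra)) e He) as [d2 [Hd2 Hd2']].
set (t := Rmin (Rmin d1 d2) ((y - x) / 3) / 2).
assert (Hm0 : 0 < Rmin (Rmin d1 d2) ((y - x) / 3)) by (repeat apply Rmin_pos; lra).
assert (Ht : 0 < t) by (unfold t; lra).
assert (Ht1 : t < d1) by (unfold t; pose proof (Rmin_l (Rmin d1 d2) ((y - x) / 3)); pose proof (Rmin_l d1 d2); lra).
assert (Ht2 : t < d2) by (unfold t; pose proof (Rmin_l (Rmin d1 d2) ((y - x) / 3)); pose proof (Rmin_r d1 d2); lra).
assert (Ht3 : t < (y - x) / 3) by (unfold t; pose proof (Rmin_r (Rmin d1 d2) ((y - x) / 3)); lra).
assert (A1 := Hd1' (x + t) ltac:(replace (x + t - x) with t by ring; rewrite Rabs_right; lra) ltac:(unfold I11; lra)).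
assert (A2 := Hd2' (y - t) ltac:(replace (y - t - y) with (- t) by ring; rewrite Rabs_Ropp, Rabs_right; lra) ltac:(unfold I11; lra)).
assert (A3 := Hint (x + t) (y - t) ltac:(lra) ltac:(lra) ltac:(lra)).
destruct (Rabs_def2 _ _ A1). destruct (Rabs_def2 _ _ A2). unfold e in *. lra.
Qed.

Definition aa (t : R) := (exp (t / 2) - exp (- (t / 2))) / t.

Lemma exp_diff_pos x : 0 < x -> exp (- x) < exp x.
Proof. intros; apply exp_increasing; lra. Qed.

Lemma exp_diff_nonneg x : 0 <= x -> 0 <= x * (exp x - exp (- x)).
Proof.
intros H. destruct (Req_dec x 0) as [->|]; [lra|].
assert (exp (- x) < exp x) by (apply exp_diff_pos; lra). nra.
Qed.

Definition psi x := x * (exp x + exp (- x)) - (exp x - exp (- x)).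

Lemma psi_deriv x : is_derive psi x (x * (exp x - exp (- x))).
Proof. unfold psi. auto_derive; auto. ring. Qed.

Lemma psi_pos x : 0 < x -> 0 < psi x.
Proof.
intros Hx.
assert (H1 : psi (x / 2) < psi x).
{ apply (incr_function psi 0 p_infty (fun x => x * (exp x - exp (- x)))); simpl; try lra.
  - intros y _ _. apply psi_deriv.
  - intros y Hy _. assert (exp (- y) < exp y) by (apply exp_diff_pos; lra). nra. }
assert (H2 : 0 <= psi (x / 2)).
{ destruct (MVT_gen psi 0 (x / 2) (fun x => x * (exp x - exp (- x)))) as [c [Hc Hc']].
  - intros; apply psi_deriv.
  - intros z _. apply derivable_continuous_pt. exists (z * (exp z - exp (- z))).
    apply is_derive_Reals, psi_deriv.
  - rewrite Rmin_left in Hc by lra. rewrite Rmax_right in Hc by lra.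
    assert (psi 0 = 0) by (unfold psi; rewrite Ropp_0; ring).
    assert (0 <= c * (exp c - exp (- c))) by (apply exp_diff_nonneg; lra).
    assert (0 <= c * (exp c - exp (- c)) * (x / 2 - 0)) by (apply Rmult_le_pos; lra).
    lra. }
lra.
Qed.

Definition rr x := (exp x - exp (- x)) / (2 * x).

Lemma rr_incr x y : 0 < x -> x < y -> rr x < rr y.
Proof.
intros Hx Hxy.
apply (incr_function rr 0 p_infty (fun x => psi x / (2 * x ^ 2))); simpl; try lra.
- intros z Hz _. unfold rr, psi. auto_derive; [lra|]. field. lra.
- intros z Hz _. apply Rdiv_lt_0_compat; [apply psi_pos; auto|]. nra.
Qed.

Lemma aa_rr t : 0 < t -> aa t = rr (t / 2).
Proof. intros. unfold aa, rr. f_equal. field. Qed.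

Lemma aa_incr s t : 0 < s -> s < t -> aa s < aa t.
Proof. intros. rewrite !aa_rr by lra. apply rr_incr; lra. Qed.

Lemma aa_pos t : 0 < t -> 0 < aa t.
Proof. intros. unfold aa. apply Rdiv_lt_0_compat; auto.
  assert (exp (- (t/2)) < exp (t/2)) by (apply exp_diff_pos; lra). lra. Qed.

Lemma aa_sq t : 0 < t -> aa t ^ 2 * t ^ 2 = 2 * (cosh t - 1).
Proof.
intros Ht. unfold aa, cosh.
assert (E1 : exp (t / 2) * exp (t / 2) = exp t) by (rewrite <- exp_plus; f_equal; field).
assert (E2 : exp (- (t / 2)) * exp (- (t / 2)) = exp (- t)) by (rewrite <- exp_plus; f_equal; field).
assert (E3 : exp (t / 2) * exp (- (t / 2)) = 1) by (rewrite <- exp_plus; replace (t / 2 + - (t / 2)) with 0 by ring; apply exp_0).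
field_simplify; [|lra]. 
replace ((exp (t / 2)) ^ 2) with (exp t) by (rewrite <- E1; ring).
replace ((exp (- (t / 2))) ^ 2) with (exp (- t)) by (rewrite <- E2; ring).
nra.
Qed.

Lemma is_RInt_expw t s : 0 < t ->
  is_RInt (fun x => exp (- t * x)) (s - 1/2) (s + 1/2) (aa t * exp (- t * s)).
Proof.
intros Ht.
assert (H := is_RInt_derive (fun x => - exp (- t * x) / t) (fun x => exp (- t * x)) (s - 1/2) (s + 1/2)).
replace (aa t * exp (- t * s)) with (minus (- exp (- t * (s + 1/2)) / t) (- exp (- t * (s - 1/2)) / t)).
- apply H.
  + intros x _. auto_derive; [lra|]. field. lra.
  + intros x _. apply (ex_derive_continuous (fun x => exp (- t * x))). auto_derive. auto.
- unfold minus, plus, opp; simpl. unfold aa.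
  replace (- t * (s + 1/2)) with (- (t / 2) + - t * s) by field.
  replace (- t * (s - 1/2)) with (t / 2 + - t * s) by field.
  rewrite !exp_plus. field. lra.
Qed.

Lemma mono_ex_RInt_dec (f : R -> R) a b : a <= b ->
  (forall x y, a <= x -> x <= y -> y <= b -> f y <= f x) -> ex_RInt f a b.
Proof.
intros Hab Hf.
apply ex_RInt_ext with (fun x => opp (opp (f x))).
- intros x _. apply opp_opp.
- apply (ex_RInt_opp (fun x => opp (f x))). apply mono_ex_RInt; auto.
  intros x y H1 H2 H3. change (- f x <= - f y). specialize (Hf x y H1 H2 H3). lra.
Qed.

Lemma opA_shift f s : ex_RInt f (s - 1/2) (s + 1/2) ->
  opA f s = RInt (fun x => f (x + s)) (-1/2) (1/2).
Proof.
intros H. unfold opA.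
assert (H' : ex_RInt f (1 * (-1/2) + s) (1 * (1/2) + s)).
{ replace (1 * (-1/2) + s) with (s - 1/2) by lra.
  replace (1 * (1/2) + s) with (s + 1/2) by lra. exact H. }
transitivity (RInt f (1 * (-1/2) + s) (1 * (1/2) + s)). { f_equal; lra. }
rewrite <- (RInt_comp_lin f 1 s _ _ H'). apply RInt_ext. intros x _. change (1 * f (1 * x + s) = f (x + s)). rewrite Rmult_1_l. f_equal. lra.
Qed.

Lemma opA_mono f : (forall x y, x <= y -> f x <= f y) ->
  forall s t, s <= t -> opA f s <= opA f t.
Proof.
intros Hf s t Hst.
rewrite !opA_shift by (apply mono_ex_RInt; [lra| intros; apply Hf; auto]).
apply RInt_le; [lra| | |].
- apply mono_ex_RInt; [lra|]. intros; apply Hf; lra.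
- apply mono_ex_RInt; [lra|]. intros; apply Hf; lra.
- intros; apply Hf; lra.
Qed.

Lemma opA_mono_dec f : (forall x y, x <= y -> f y <= f x) ->
  forall s t, s <= t -> opA f t <= opA f s.
Proof.
intros Hf s t Hst.
rewrite !opA_shift by (apply mono_ex_RInt_dec; [lra| intros; apply Hf; auto]).
apply RInt_le; [lra| | |].
- apply mono_ex_RInt_dec; [lra|]. intros; apply Hf; lra.
- apply mono_ex_RInt_dec; [lra|]. intros; apply Hf; lra.
- intros; apply Hf; lra.
Qed.

Lemma opA_le f g s : ex_RInt f (s - 1/2) (s + 1/2) -> ex_RInt g (s - 1/2) (s + 1/2) ->
  (forall x, s - 1/2 <= x <= s + 1/2 -> f x <= g x) -> opA f s <= opA g s.
Proof.
intros H1 H2 H3. unfold opA. apply RInt_le; auto; [lra|]. intros; apply H3; lra.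
Qed.

Lemma opA_const c s : opA (fun _ => c) s = c.
Proof. unfold opA. rewrite RInt_const. replace (s + 1/2 - (s - 1/2)) with 1 by lra. apply (scal_one (K := R_Ring)). Qed.

Lemma opA_one_minus f s : ex_RInt f (s - 1/2) (s + 1/2) ->
  opA (fun x => 1 - f x) s = 1 - opA f s.
Proof.
intros H. unfold opA.
rewrite (RInt_minus (fun _ => 1) f); [|apply ex_RInt_const|auto].
rewrite RInt_const. unfold minus, plus, opp, scal; simpl; unfold mult; simpl. lra.
Qed.

Lemma is_RInt_affexp t A B s : 0 < t ->
  is_RInt (fun x => A * exp (- t * x) + B) (s - 1/2) (s + 1/2)
    (A * aa t * exp (- t * s) + B).
Proof.
intros Ht.
assert (H := is_RInt_plus _ _ _ _ _ _
  (is_RInt_scal _ _ _ A _ (is_RInt_expw t s Ht))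
  (is_RInt_const (s - 1/2) (s + 1/2) B)).
replace (A * aa t * exp (- t * s) + B) with
  (plus (scal A (aa t * exp (- t * s))) (scal (s + 1 / 2 - (s - 1 / 2)) B)).
- exact H.
- unfold plus, scal; simpl; unfold mult; simpl. replace (s + 1 / 2 - (s - 1 / 2)) with 1 by lra. lra.
Qed.

Lemma opA_affexp t A B s : 0 < t ->
  opA (fun x => A * exp (- t * x) + B) s = A * aa t * exp (- t * s) + B.
Proof. intros Ht. apply is_RInt_unique, is_RInt_affexp; auto. Qed.

Lemma ex_RInt_affexp t A B s : 0 < t ->
  ex_RInt (fun x => A * exp (- t * x) + B) (s - 1/2) (s + 1/2).
Proof. intros Ht. eexists. apply is_RInt_affexp; auto. Qed.

Lemma opA_quarter f s : (forall x y, x <= y -> f y <= f x) -> (forall x, 0 <= f x) ->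
  / 4 * f (s - 1/4) <= opA f s.
Proof.
intros Hf Hp. unfold opA.
assert (Hi : forall a b, a <= b -> ex_RInt f a b) by
  (intros; apply mono_ex_RInt_dec; auto; intros; apply Hf; auto).
rewrite <- (RInt_Chasles f (s - 1/2) (s - 1/4) (s + 1/2)) by (apply Hi; lra).
change (plus ?a ?b) with (a + b).
assert (H1 : RInt (fun _ => f (s - 1/4)) (s - 1/2) (s - 1/4) <= RInt f (s - 1/2) (s - 1/4)).
{ apply RInt_le; [lra|apply ex_RInt_const|apply Hi; lra|]. intros; apply Hf; lra. }
assert (H2 : RInt (fun _ => 0) (s - 1/4) (s + 1/2) <= RInt f (s - 1/4) (s + 1/2)).
{ apply RInt_le; [lra|apply ex_RInt_const|apply Hi; lra|]. intros; apply Hp. }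
rewrite !RInt_const in H1, H2. unfold scal in H1, H2; simpl in H1, H2; unfold mult in H1, H2; simpl in H1, H2.
lra.
Qed.

Lemma exp_ge1 x : 0 <= x -> 1 <= exp x.
Proof. intros H. rewrite <- exp_0. destruct (Req_dec x 0) as [->|]; [lra|]. left; apply exp_increasing; lra. Qed.

Lemma exp_shift_ge t p0 p : 0 < t -> p <= p0 -> 1 <= exp (t * p0) * exp (- t * p).
Proof. intros. rewrite <- exp_plus. apply exp_ge1. nra. Qed.

Lemma exp_le1 t p : 0 < t -> 0 <= p -> exp (- t * p) <= 1.
Proof. intros. rewrite <- exp_0. destruct (Req_dec p 0) as [->|]. { right; f_equal; ring. }
  left; apply exp_increasing; nra. Qed.

Theorem lemma4p1
  (Phi Phi1 Phi2 : R -> R)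
  (HPhi1 : forall x, I11 x -> has_deriv_on_I11 Phi x (Phi1 x))
  (HPhi2 : forall x, I11 x -> has_deriv_on_I11 Phi1 x (Phi2 x))
  (HPhi2c : forall x, I11 x -> cont_on_I11 Phi2 x)
  (Hm1 : Phi1 (-1) = -1) (Hp1 : Phi1 1 = 1)
  (Hconv : forall x, I11 x -> 0 <= Phi2 x)
  (Hsym : Phi (-1) = Phi 1)
  (Hlm : Phi2 (-1) < 1)
  (Hlp : 0 < Phi2 1 < 1)
  (tau_p : R) (Htau_pos : 0 < tau_p)
  (Htau_eq : tau_p ^ 2 = 2 * Phi2 1 * (cosh tau_p - 1))
  (W : R -> R)
  (Wbdd : exists M, forall x, Rabs (W x) <= M)
  (Wmono : forall x y, x <= y -> W x <= W y)
  (Weq : forall phi, W phi = opA (fun s => Phi1 (opA W s)) phi)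
  (Wlimp : is_lim W p_infty 1)
  (Wlimm : is_lim W m_infty (-1)) :
  forall tau_lo tau_hi, tau_lo < tau_p < tau_hi ->
  exists c_lo c_hi, 0 < c_lo /\ 0 < c_hi /\
    forall phi, 0 <= phi ->
      c_lo * exp (- tau_hi * phi) <= Wsh phi - W phi /\
      Wsh phi - W phi <= c_hi * exp (- tau_lo * phi).
Proof.
intros tau_lo tau_hi Htau.
set (lam := Phi2 1).
assert (Lp : forall e, 0 < e -> exists M, forall x, M < x -> Rabs (W x - 1) < e).
{ intros e He. apply (Wlimp (fun y => Rabs (y - 1) < e)). exists (mkposreal e He).
  intros y Hy. exact Hy. }
assert (Lm : forall e, 0 < e -> exists M, forall x, x < M -> Rabs (W x + 1) < e).
{ intros e He. destruct (Wlimm (fun y => Rabs (y - (-1)) < e)) as [M HM].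
  { exists (mkposreal e He). intros y Hy. exact Hy. }
  exists M. intros x Hx. specialize (HM x Hx). replace (W x + 1) with (W x - (-1)) by ring. exact HM. }
assert (Wle1 : forall x, W x <= 1).
{ intros x. apply Rnot_lt_le. intros H.
  destruct (Lp (W x - 1) ltac:(lra)) as [M HM].
  set (y := Rmax M x + 1).
  assert (H1 := HM y ltac:(unfold y; pose proof (Rmax_l M x); lra)).
  assert (H2 := Wmono x y ltac:(unfold y; pose proof (Rmax_r M x); lra)).
  destruct (Rabs_def2 _ _ H1). lra. }
assert (Wgem1 : forall x, -1 <= W x).
{ intros x. apply Rnot_lt_le. intros H.
  destruct (Lm (-1 - W x) ltac:(lra)) as [M HM].
  set (y := Rmin M x - 1).
  assert (H1 := HM y ltac:(unfold y; pose proof (Rmin_l M x); lra)).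
  assert (H2 := Wmono y x ltac:(unfold y; pose proof (Rmin_r M x); lra)).
  destruct (Rabs_def2 _ _ H1). lra. }
assert (Wint : forall a b, a <= b -> ex_RInt W a b).
{ intros a b Hab. apply mono_ex_RInt; auto. }
set (AW := opA W).
assert (AWmono : forall s t, s <= t -> AW s <= AW t) by (apply opA_mono; auto).
assert (AWb : forall s, -1 <= AW s <= 1).
{ intros s. unfold AW. split.
  - rewrite <- (opA_const (-1) s). apply opA_le; auto; [apply ex_RInt_const|apply Wint; lra].
  - rewrite <- (opA_const 1 s). apply opA_le; auto; [apply Wint; lra|apply ex_RInt_const]. }
assert (P1mono : forall x y, -1 <= x -> x <= y -> y <= 1 -> Phi1 x <= Phi1 y)
  by (apply (mono_I11 Phi1 Phi2); auto).
set (h := fun s => Phi1 (AW s)).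
assert (hmono : forall s t, s <= t -> h s <= h t).
{ intros s t Hst. unfold h. apply P1mono; try apply AWb. apply AWmono; auto. }
assert (hint : forall a b, a <= b -> ex_RInt h a b).
{ intros a b Hab. apply mono_ex_RInt; auto. }
set (V := fun x => 1 - W x).
set (G := fun s => 1 - h s).
assert (Vnn : forall x, 0 <= V x) by (intros; unfold V; pose proof (Wle1 x); lra).
assert (Vle2 : forall x, V x <= 2) by (intros; unfold V; pose proof (Wgem1 x); lra).
assert (Vdec : forall x y, x <= y -> V y <= V x) by (intros; unfold V; pose proof (Wmono x y H); lra).
assert (Gdec : forall x y, x <= y -> G y <= G x) by (intros; unfold G; pose proof (hmono x y H); lra).
assert (Gint : forall a b, a <= b -> ex_RInt G a b).
{ intros a b Hab. apply mono_ex_RInt_dec; auto. }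
assert (HV : forall phi, V phi = opA G phi).
{ intros phi. unfold V, G. rewrite opA_one_minus by (apply hint; lra). rewrite Weq. reflexivity. }
assert (HAV : forall s, opA V s = 1 - AW s).
{ intros s. unfold V, AW. apply opA_one_minus. apply Wint; lra. }
assert (AVint : forall a b, a <= b -> ex_RInt (fun s => opA V s) a b).
{ intros a b Hab. apply mono_ex_RInt_dec; auto. intros x y _ Hxy _. rewrite !HAV.
  pose proof (AWmono x y Hxy). lra. }
assert (gloc : forall e, 0 < e -> exists d, 0 < d /\ forall y, 1 - d < y <= 1 ->
          (lam - e) * (1 - y) <= 1 - Phi1 y <= (lam + e) * (1 - y)).
{ intros e He.
  destruct (deriv_eps Phi1 1 (Phi2 1) (HPhi2 1 ltac:(unfold I11; lra)) e He) as [d [Hd Hd']].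
  exists (Rmin d 2). split; [apply Rmin_pos; lra|]. intros y Hy.
  destruct (Req_dec y 1) as [->|Hne].
  - rewrite Hp1. lra.
  - assert (Hy1 : 1 - y < d) by (pose proof (Rmin_l d 2); lra).
    assert (Hy2 : 1 - y < 2) by (pose proof (Rmin_r d 2); lra).
    assert (H := Hd' (y - 1) ltac:(lra) ltac:(rewrite Rabs_left by lra; lra)
                  ltac:(unfold I11; lra)).
    replace (1 + (y - 1)) with y in H by ring. rewrite Hp1 in H.
    replace ((Phi1 y - 1) / (y - 1)) with ((1 - Phi1 y) / (1 - y)) in H by (field; lra).
    destruct (Rabs_def2 _ _ H) as [H1 H2]. fold lam in H1, H2.
    assert (Hp : 0 < 1 - y) by lra.
    split.
    + apply Rmult_le_reg_r with (/ (1 - y)); [apply Rinv_0_lt_compat; lra|].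
      rewrite Rmult_assoc, Rinv_r by lra. unfold Rdiv in H2. lra.
    + apply Rmult_le_reg_r with (/ (1 - y)); [apply Rinv_0_lt_compat; lra|].
      rewrite Rmult_assoc, Rinv_r by lra. unfold Rdiv in H1. lra. }
assert (P1lt1 : forall y, -1 <= y < 1 -> Phi1 y < 1).
{ destruct (gloc (lam / 2) ltac:(unfold lam; lra)) as [d [Hd Hd']].
  intros y Hy.
  set (z := Rmax y (1 - d / 2)).
  assert (Hz1 : y <= z) by apply Rmax_l.
  assert (Hz2 : 1 - d / 2 <= z) by apply Rmax_r.
  assert (Hz3 : z < 1) by (unfold z; apply Rmax_lub_lt; lra).
  assert (H1 := P1mono y z ltac:(lra) Hz1 ltac:(lra)).
  assert (H2 := Hd' z ltac:(lra)). unfold lam in H2.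
  assert (0 < (Phi2 1 - Phi2 1 / 2) * (1 - z)) by (apply Rmult_lt_0_compat; lra).
  lra. }
assert (Gnn : forall s, 0 <= G s).
{ intros s. unfold G, h. destruct (AWb s) as [H1 H2].
  destruct (Req_dec (AW s) 1) as [->|Hne]; [rewrite Hp1; lra|].
  pose proof (P1lt1 (AW s) ltac:(lra)). lra. }
assert (Vpos : forall x, 0 < V x).
{ intros x0. destruct (Rle_lt_or_eq_dec 0 (V x0) (Vnn x0)) as [|H0]; auto. exfalso.
  assert (step : forall x, V x = 0 -> V (x - 1/2) = 0).
  { intros x Hx.
    assert (Q1 := opA_quarter G x Gdec Gnn). rewrite <- HV, Hx in Q1.
    assert (HG : G (x - 1/4) = 0) by (pose proof (Gnn (x - 1/4)); lra).
    assert (HA : AW (x - 1/4) = 1).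
    { unfold G, h in HG. destruct (AWb (x - 1/4)).
      destruct (Req_dec (AW (x - 1/4)) 1) as [|Hne]; auto.
      pose proof (P1lt1 (AW (x - 1/4)) ltac:(lra)). lra. }
    assert (Q2 := opA_quarter V (x - 1/4) Vdec Vnn). rewrite HAV, HA in Q2.
    replace (x - 1/4 - 1/4) with (x - 1/2) in Q2 by lra.
    pose proof (Vnn (x - 1/2)). lra. }
  assert (Hn : forall n, V (x0 - INR n / 2) = 0).
  { induction n as [|n IH].
    - simpl. replace (x0 - 0 / 2) with x0 by lra. auto.
    - rewrite S_INR. replace (x0 - (INR n + 1) / 2) with (x0 - INR n / 2 - 1/2) by lra.
      apply step; auto. }
  destruct (Lm 1 Rlt_0_1) as [M HM].
  destruct (INR_unbounded (2 * (x0 - M))) as [n Hn'].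
  assert (H1 := HM (x0 - INR n / 2) ltac:(lra)).
  unfold V in Hn. specialize (Hn n).
  destruct (Rabs_def2 _ _ H1). lra. }
assert (Vint : forall a b, a <= b -> ex_RInt V a b).
{ intros a b Hab. apply mono_ex_RInt_dec; auto. }
assert (Vsmall : forall d, 0 < d -> exists x1, forall x, x1 <= x -> V x <= d).
{ intros d Hd. destruct (Lp d Hd) as [M HM]. exists (M + 1). intros x Hx.
  specialize (HM x ltac:(lra)). destruct (Rabs_def2 _ _ HM). unfold V. lra. }
assert (AVsmall : forall x1 d, (forall x, x1 <= x -> V x <= d) ->
          forall s, x1 + 1/2 <= s -> 0 <= opA V s <= d).
{ intros x1 d Hx1 s Hs. split.
  - rewrite <- (opA_const 0 s). apply opA_le; [apply ex_RInt_const|apply Vint; lra|]. intros; apply Vnn.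
  - rewrite <- (opA_const d s). apply opA_le; [apply Vint; lra|apply ex_RInt_const|]. intros; apply Hx1; lra. }
assert (AVG : forall e d x1, 0 < e -> 0 < d ->
          (forall y, 1 - d < y <= 1 -> (lam - e) * (1 - y) <= 1 - Phi1 y <= (lam + e) * (1 - y)) ->
          (forall x, x1 <= x -> V x <= d / 2) ->
          forall s, x1 + 1/2 <= s -> (lam - e) * opA V s <= G s <= (lam + e) * opA V s).
{ intros e d x1 He Hd Hg Hx1 s Hs.
  assert (H := AVsmall x1 (d / 2) Hx1 s Hs). rewrite HAV in H |- *.
  unfold G, h. apply Hg. lra. }
assert (AVmul_int : forall c a b, 0 <= c -> a <= b -> ex_RInt (fun s => c * opA V s) a b).
{ intros c a b Hc Hab. apply mono_ex_RInt_dec; auto. intros x y _ Hxy _. rewrite !HAV.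
  pose proof (AWmono x y Hxy). nra. }
assert (Hap : lam * aa tau_p ^ 2 = 1).
{ assert (H := aa_sq tau_p Htau_pos). unfold lam.
  assert (0 < tau_p ^ 2) by (apply pow_lt; lra).
  apply Rmult_eq_reg_r with (tau_p ^ 2); [|lra]. rewrite Rmult_1_l.
  rewrite Rmult_assoc, H, Htau_eq. ring. }
assert (Upper : forall t, 0 < t < tau_p -> exists C, 0 < C /\
          forall phi, 0 <= phi -> V phi <= C * exp (- t * phi)).
{ intros t Ht.
  set (a := aa t).
  assert (Ha0 : 0 < a) by (apply aa_pos; lra).
  assert (Hla : lam * a ^ 2 < 1).
  { assert (a < aa tau_p) by (apply aa_incr; lra). rewrite <- Hap.
    apply Rmult_lt_compat_l; [unfold lam; lra|]. nra. }
  assert (Ha2 : 0 < a ^ 2) by (apply pow_lt; lra).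
  set (m1 := Rmin 1 (/ a ^ 2)).
  assert (Hm1a : m1 * a ^ 2 <= 1).
  { unfold m1. pose proof (Rmin_r 1 (/ a ^ 2)).
    replace 1 with (/ a ^ 2 * a ^ 2) at 2 by (field; lra). apply Rmult_le_compat_r; lra. }
  assert (Hlm1 : lam < m1).
  { unfold m1. apply Rmin_glb_lt; [unfold lam; lra|].
    apply Rmult_lt_reg_r with (a ^ 2); auto. rewrite Rinv_l by lra. lra. }
  assert (Hm1le : m1 <= 1) by apply Rmin_l.
  set (mu := (lam + m1) / 2).
  assert (Hmu1 : mu < 1) by (unfold mu; lra).
  assert (Hmu0 : 0 < mu) by (unfold mu, lam in *; lra).
  assert (Hmua : mu * a ^ 2 <= 1) by (unfold mu; nra).
  destruct (gloc (mu - lam) ltac:(unfold mu; lra)) as [d [Hd Hd']].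
  destruct (Vsmall (d / 2) ltac:(lra)) as [x1 Hx1].
  set (phi0 := Rmax x1 1 + 1).
  assert (Hp0 : x1 + 1 <= phi0) by (unfold phi0; pose proof (Rmax_l x1 1); lra).
  assert (Hp2 : 2 <= phi0) by (unfold phi0; pose proof (Rmax_r x1 1); lra).
  assert (GleAV : forall s, phi0 - 1/2 <= s -> G s <= mu * opA V s).
  { intros s Hs. destruct (AVG (mu - lam) d x1 ltac:(unfold mu; lra) Hd Hd' Hx1 s ltac:(lra)) as [_ H].
    replace (lam + (mu - lam)) with mu in H by ring. exact H. }
  set (C := 2 * exp (t * phi0)).
  assert (HC : 0 < C) by (unfold C; pose proof (exp_pos (t * phi0)); lra).
  assert (Hbase : forall phi, phi <= phi0 -> 2 <= C * exp (- t * phi)).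
  { intros phi Hphi. unfold C. rewrite Rmult_assoc.
    pose proof (exp_shift_ge t phi0 phi ltac:(lra) Hphi). lra. }
  assert (Claim : forall k : nat, forall phi, phi0 - 1 <= phi ->
            V phi <= C * exp (- t * phi) + 2 * mu ^ k).
  { induction k as [|k IH]; intros phi Hphi.
    - simpl. pose proof (Vle2 phi). pose proof (exp_pos (- t * phi)).
      assert (0 < C * exp (- t * phi)) by (apply Rmult_lt_0_compat; lra). lra.
    - assert (Hmk : 0 <= mu ^ k) by (apply pow_le; lra).
      destruct (Rle_lt_dec phi0 phi) as [Hge|Hlt].
      + rewrite HV.
        apply Rle_trans with (opA (fun s => mu * opA V s) phi).
        { apply opA_le; [apply Gint; lra|apply AVmul_int; lra|]. intros; apply GleAV; lra. }
        apply Rle_trans with (opA (fun s => (mu * C * a) * exp (- t * s) + mu * (2 * mu ^ k)) phi).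
        { apply opA_le; [apply AVmul_int; lra|apply ex_RInt_affexp; lra|].
          intros s Hs.
          assert (opA V s <= opA (fun x => C * exp (- t * x) + 2 * mu ^ k) s).
          { apply opA_le; [apply Vint; lra|apply ex_RInt_affexp; lra|]. intros; apply IH; lra. }
          rewrite opA_affexp in H by lra. fold a in H. nra. }
        rewrite opA_affexp by lra. fold a. simpl.
        pose proof (exp_pos (- t * phi)).
        assert (mu * C * a * a * exp (- t * phi) <= C * exp (- t * phi)).
        { replace (mu * C * a * a * exp (- t * phi)) with ((mu * a ^ 2) * (C * exp (- t * phi))) by ring.
          assert (0 < C * exp (- t * phi)) by (apply Rmult_lt_0_compat; lra). nra. }
        lra.
      + pose proof (Vle2 phi). pose proof (Hbase phi ltac:(lra)).
        assert (0 <= mu ^ S k) by (apply pow_le; lra). lra. }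
  exists C. split; auto. intros phi Hphi.
  destruct (Rle_lt_dec phi phi0) as [Hle|Hgt].
  - pose proof (Vle2 phi). pose proof (Hbase phi Hle). lra.
  - apply Rnot_lt_le. intros Hc.
    destruct (pow_lt_1_zero mu ltac:(rewrite Rabs_right; lra) ((V phi - C * exp (- t * phi)) / 2) ltac:(lra)) as [N HN].
    specialize (HN N (le_n N)). rewrite Rabs_right in HN by (apply Rle_ge, pow_le; lra).
    specialize (Claim N phi ltac:(lra)). lra. }
assert (Lower : forall t, tau_p < t -> exists c, 0 < c /\
          forall phi, 0 <= phi -> c * exp (- t * phi) <= V phi).
{ intros t Ht.
  set (a := aa t).
  assert (Ha0 : 0 < a) by (apply aa_pos; lra).
  assert (Hapos : 0 < aa tau_p) by (apply aa_pos; lra).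
  assert (Hla : 1 < lam * a ^ 2).
  { assert (aa tau_p < a) by (apply aa_incr; lra). rewrite <- Hap.
    apply Rmult_lt_compat_l; [unfold lam; lra|]. nra. }
  assert (Ha2 : 0 < a ^ 2) by (apply pow_lt; lra).
  assert (Hinv : / a ^ 2 < lam).
  { apply Rmult_lt_reg_r with (a ^ 2); auto. rewrite Rinv_l by lra. lra. }
  assert (Hinv0 : 0 < / a ^ 2) by (apply Rinv_0_lt_compat; lra).
  set (nu := (lam + / a ^ 2) / 2).
  assert (Hnu1 : nu < lam) by (unfold nu; lra).
  assert (Hnu0 : 0 < nu) by (unfold nu, lam in *; lra).
  assert (Hnul : nu < 1) by (unfold lam in *; lra).
  assert (Hnua : 1 <= nu * a ^ 2).
  { unfold nu. assert (/ a ^ 2 * a ^ 2 = 1) by (field; lra). nra. }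
  destruct (gloc (lam - nu) ltac:(lra)) as [d [Hd Hd']].
  destruct (Vsmall (d / 2) ltac:(lra)) as [x1 Hx1].
  set (phi0 := Rmax x1 1 + 1).
  assert (Hp0 : x1 + 1 <= phi0) by (unfold phi0; pose proof (Rmax_l x1 1); lra).
  assert (Hp2 : 2 <= phi0) by (unfold phi0; pose proof (Rmax_r x1 1); lra).
  assert (GgeAV : forall s, phi0 - 1/2 <= s -> nu * opA V s <= G s).
  { intros s Hs. destruct (AVG (lam - nu) d x1 ltac:(lra) Hd Hd' Hx1 s ltac:(lra)) as [H _].
    replace (lam - (lam - nu)) with nu in H by ring. exact H. }
  set (c := V phi0).
  assert (Hc : 0 < c) by apply Vpos.
  assert (Claim : forall k : nat, forall phi, phi0 - 1 <= phi ->
            c * exp (- t * phi) - c * nu ^ k <= V phi).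
  { induction k as [|k IH]; intros phi Hphi.
    - simpl. pose proof (Vnn phi). pose proof (exp_le1 t phi ltac:(lra) ltac:(lra)). nra.
    - assert (Hmk : 0 <= nu ^ k) by (apply pow_le; lra).
      destruct (Rle_lt_dec phi0 phi) as [Hge|Hlt].
      + rewrite HV.
        apply Rle_trans with (opA (fun s => nu * opA V s) phi).
        2:{ apply opA_le; [apply AVmul_int; lra|apply Gint; lra|]. intros; apply GgeAV; lra. }
        apply Rle_trans with (opA (fun s => (nu * c * a) * exp (- t * s) + nu * (- (c * nu ^ k))) phi).
        2:{ apply opA_le; [apply ex_RInt_affexp; lra|apply AVmul_int; lra|].
          intros s Hs.
          assert (opA (fun x => c * exp (- t * x) + - (c * nu ^ k)) s <= opA V s).
          { apply opA_le; [apply ex_RInt_affexp; lra|apply Vint; lra|].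
            intros x Hx. specialize (IH x ltac:(lra)). lra. }
          rewrite opA_affexp in H by lra. fold a in H. nra. }
        rewrite opA_affexp by lra. fold a. simpl.
        pose proof (exp_pos (- t * phi)).
        assert (c * exp (- t * phi) <= nu * c * a * a * exp (- t * phi)).
        { replace (nu * c * a * a * exp (- t * phi)) with ((nu * a ^ 2) * (c * exp (- t * phi))) by ring.
          assert (0 < c * exp (- t * phi)) by (apply Rmult_lt_0_compat; lra). nra. }
        lra.
      + pose proof (Vdec phi phi0 ltac:(lra)). fold c in H.
        pose proof (exp_le1 t phi ltac:(lra) ltac:(lra)).
        assert (0 <= nu ^ S k) by (apply pow_le; lra). nra. }
  exists c. split; auto. intros phi Hphi.
  destruct (Rle_lt_dec phi phi0) as [Hle|Hgt].
  - pose proof (Vdec phi phi0 Hle). fold c in H.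
    pose proof (exp_le1 t phi ltac:(lra) Hphi). nra.
  - apply Rnot_lt_le. intros Hcc.
    destruct (pow_lt_1_zero nu ltac:(rewrite Rabs_right; lra) ((c * exp (- t * phi) - V phi) / (2 * c)) ltac:(apply Rdiv_lt_0_compat; lra)) as [N HN].
    specialize (HN N (le_n N)). rewrite Rabs_right in HN by (apply Rle_ge, pow_le; lra).
    specialize (Claim N phi ltac:(lra)).
    assert (c * nu ^ N < (c * exp (- t * phi) - V phi) / 2).
    { apply Rmult_lt_compat_l with (r := c) in HN; auto.
      replace (c * ((c * exp (- t * phi) - V phi) / (2 * c))) with ((c * exp (- t * phi) - V phi) / 2) in HN by (field; lra).
      exact HN. }
    lra. }
destruct (Lower tau_hi ltac:(lra)) as [clo [Hclo Hlo]].
assert (Hup : exists chi, 0 < chi /\ forall phi, 0 <= phi -> V phi <= chi * exp (- tau_lo * phi)).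
{ destruct (Rle_lt_dec tau_lo 0) as [Hn|Hp].
  - exists 2. split; [lra|]. intros phi Hphi. pose proof (Vle2 phi).
    assert (1 <= exp (- tau_lo * phi)) by (apply exp_ge1; nra). lra.
  - apply Upper. lra. }
destruct Hup as [chi [Hchi Hhi]].
exists clo, chi. split; [auto|]. split; [auto|].
intros phi Hphi.
assert (Hsh : Wsh phi = 1) by (unfold Wsh; destruct (Rlt_dec phi 0); [lra|reflexivity]).
rewrite Hsh. split.
- apply Hlo; auto.
- apply Hhi; auto.
Qed.
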